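(* Let $\mathcal{N}_1,\ldots,\mathcal{N}_l$ be subsets of $\mathcal{N}=\{1,\ldots,n\}$ with $\bigcup_{i=1}^l\mathcal{N}_i=\mathcal{N}$, satisfying the tree condition $$\mathcal{N}_i\cap\mathcal{N}_j\neq\emptyset\implies(\mathcal{N}_i\subseteq\mathcal{N}_j\text{ or }\mathcal{N}_j\subseteq\mathcal{N}_i).$$ For each $i$ let $\|\cdot\|_i:\mathbb{R}^{|\mathcal{N}_i|}\to\mathbb{R}_+$ be an arbitrary norm, and define $$\|z\|_A=\sum_{i=1}^l\|z_{\mathcal{N}_i}\|_i ,$$ where $\|z_{\mathcal{N}_i}\|_i$ means $\|\cdot\|_i$ applied to $(z_j)_{j\in\mathcal{N}_i}$. Let $\mathcal{G}=\{G_1,\ldots,G_g\}$ be the collection of distinct inclusion-maximal sets among $\mathcal{N}_1,\ldots,\mathcal{N}_l$ (these form a partition of $\mathcal{N}$). Then $\|\cdot\|_A$ is decomposable with respect to $\mathcal{G}$.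
   Context: For $z\in\mathbb{R}^n$ and $\Lambda\subseteq\mathcal{N}$, $z_\Lambda\in\mathbb{R}^n$ denotes the vector with $(z_\Lambda)_i=z_i$ for $i\in\Lambda$ and $0$ otherwise; $\mathrm{supp}(u)=\{i:u_i\neq0\}$. For a partition $\mathcal{G}=\{G_1,\ldots,G_g\}$ of $\mathcal{N}$ and $S\subseteq\{1,\ldots,g\}$ let $G_S=\bigcup_{i\in S}G_i$. A norm $\|\cdot\|$ on $\mathbb{R}^n$ is decomposable with respect to $\mathcal{G}$ if, whenever $u,v\in\mathbb{R}^n$ satisfy $\mathrm{supp}(u)\subseteq G_{S_u}$, $\mathrm{supp}(v)\subseteq G_{S_v}$ with $S_u,S_v$ disjoint subsets of $\{1,\ldots,g\}$, one has $\|u+v\|=\|u\|+\|v\|$. *)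

(* Defs.v *)
From HB Require Import structures.
From mathcomp Require Import all_boot all_order all_algebra.
Set Implicit Arguments. Unset Strict Implicit. Unset Printing Implicit Defensive.
Import Order.TTheory GRing.Theory Num.Theory.
Local Open Scope ring_scope.

Definition is_norm (R : realDomainType) (I : finType) (nu : (I -> R) -> R) : Prop :=
  [/\ (forall x, 0 <= nu x),
      (forall x, nu x = 0 -> forall j, x j = 0),
      (forall (a : R) x, nu (fun j => a * x j) = `|a| * nu x) &
      (forall x y, nu (fun j => x j + y j) <= nu x + nu y)].

Definition restrict (R : Type) (n : nat) (A : {set 'I_n}) (z : 'I_n -> R)
  : {x : 'I_n | x \in A} -> R := fun x => z (val x).

Definition normA (R : realDomainType) (n l : nat) (N : 'I_l -> {set 'I_n})
  (nu : forall i : 'I_l, ({x : 'I_n | x \in N i} -> R) -> R) (z : 'I_n -> R) : R :=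
  \sum_(i < l) nu i (@restrict R n (N i) z).

Definition maximal_sets (n l : nat) (N : 'I_l -> {set 'I_n}) : {set {set 'I_n}} :=
  [set N i | i in [set i : 'I_l | [forall j : 'I_l, (N i \subset N j) ==> (N j == N i)]]].

Definition unionG (n : nat) (S : {set {set 'I_n}}) : {set 'I_n} := \bigcup_(B in S) B.

Definition decomposable (R : realDomainType) (n : nat) (nrm : ('I_n -> R) -> R)
  (G : {set {set 'I_n}}) : Prop :=
  forall (Su Sv : {set {set 'I_n}}), Su \subset G -> Sv \subset G -> [disjoint Su & Sv] ->
  forall u v : 'I_n -> R,
    (forall j, u j != 0 -> j \in unionG Su) ->
    (forall j, v j != 0 -> j \in unionG Sv) ->
    nrm (fun j => u j + v j) = nrm u + nrm v.

(* Main.v *)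
Require Import Defs.
From HB Require Import structures.
From mathcomp Require Import all_boot all_order all_algebra.
From Stdlib Require Import FunctionalExtensionality.
Import Order.TTheory GRing.Theory Num.Theory.
Local Open Scope ring_scope.

Lemma max_meet (n l : nat) (N : 'I_l -> {set 'I_n}) B i x :
  (forall i j : 'I_l, N i :&: N j != set0 -> (N i \subset N j) || (N j \subset N i)) ->
  B \in maximal_sets N -> x \in B -> x \in N i -> N i \subset B.
Proof.
move=> tree /imsetP [a]; rewrite inE => /forallP Ha -> xa xi.
have : N a :&: N i != set0 by apply/set0Pn; exists x; rewrite inE xa xi.
move/tree/orP => [sub|//].
by have := Ha i; rewrite sub /= => /eqP ->.
Qed.

Lemma max_eq (n l : nat) (N : 'I_l -> {set 'I_n}) B B' x :
  (forall i j : 'I_l, N i :&: N j != set0 -> (N i \subset N j) || (N j \subset N i)) ->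
  B \in maximal_sets N -> B' \in maximal_sets N -> x \in B -> x \in B' -> B = B'.
Proof.
move=> tree HB HB' xB xB'.
move: (HB) => /imsetP [a _ Ea].
move: (HB') => /imsetP [b _ Eb].
apply/eqP; rewrite eqEsubset.
have h1 : N a \subset B' by apply: (max_meet _ _ _ _ _ _ tree HB' xB'); rewrite -Ea.
have h2 : N b \subset B by apply: (max_meet _ _ _ _ _ _ tree HB xB); rewrite -Eb.
rewrite Ea Eb in h1 h2 *; by rewrite h1 h2.
Qed.

Lemma nu_zero (R : realFieldType) (I : finType) (nu : (I -> R) -> R) (x : I -> R) :
  is_norm nu -> (forall j, x j = 0) -> nu x = 0.
Proof.
case=> _ _ hom _ hx.
have -> : x = (fun j => 0 * x j) by apply: functional_extensionality => j; rewrite hx mul0r.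
by rewrite hom normr0 mul0r.
Qed.

Theorem corollary2p3 (R : realFieldType) (n l : nat) (N : 'I_l -> {set 'I_n})
  (nu : forall i : 'I_l, ({x : 'I_n | x \in N i} -> R) -> R) :
  \bigcup_(i < l) N i = [set: 'I_n] ->
  (forall i j : 'I_l, N i :&: N j != set0 -> (N i \subset N j) || (N j \subset N i)) ->
  (forall i : 'I_l, is_norm (nu i)) ->
  decomposable (normA nu) (maximal_sets N).
Proof.
move=> _ tree norms Su Sv sSu sSv dis u v hu hv.
rewrite /normA -big_split /=; apply: eq_bigr => i _.
have [uz|] := boolP [forall j in N i, u j == 0].
  rewrite (@nu_zero _ _ (nu i) (@restrict _ _ (N i) u)) ?add0r //; last first.
    by move=> [j jN]; rewrite /restrict /=; apply/eqP; move/forall_inP: uz; apply.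
  congr (nu i); apply: functional_extensionality => [[j jN]].
  by rewrite /restrict /=; move/forall_inP: uz => /(_ j jN)/eqP ->; rewrite add0r.
case/forall_inPn => j jN /hu /bigcupP [B BS jB].
have BG : B \in maximal_sets N by move/subsetP: sSu; apply.
have NB := max_meet _ _ _ _ _ _ tree BG jB jN.
have vz : forall k, k \in N i -> v k = 0.
  move=> k kN; apply/eqP; apply/negP => /negP /hv /bigcupP [B' B'S kB'].
  have B'G : B' \in maximal_sets N by move/subsetP: sSv; apply.
  have kB : k \in B by move/subsetP: NB; apply.
  have E := max_eq _ _ _ _ _ _ tree BG B'G kB kB'.
  by move/disjoint_setI0: dis => /setP /(_ B); rewrite !inE BS E B'S.
rewrite (@nu_zero _ _ (nu i) (@restrict _ _ (N i) v)) ?addr0 //; last first.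
  by move=> [k kN]; rewrite /restrict /= vz.
congr (nu i); apply: functional_extensionality => [[k kN]].
by rewrite /restrict /= vz // addr0.
Qed.
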